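(* Let $2\le y\le x$ and let $k\ge0$ be an integer. For $i\ge0$ define $$S_i(x,y)=\{n\le x:\ \text{there is a prime } p>y \text{ with } p^2\mid\phi_i(n)\}.$$ Then $$\left|\Psi(x,P_k)-\Phi_k(x,y)\right|\le\sum_{i=0}^{k-1}|S_i(x,y)|.$$
   Context: $\phi$ is Euler's function, $\phi_0(n)=n$, $\phi_{i+1}(n)=\phi(\phi_i(n))$. $\Phi_k(x,y)=\#\{n\le x:\ p\mid\phi_k(n)\Rightarrow p\le y\}$ ($p$ prime). For a set $P$ of primes, $\Psi(x,P)=\#\{n\le x:\ p\mid n\Rightarrow p\in P\}$. The sets of primes $P_k$ are defined by $P_0=\{p\le y\}$ and $P_{k+1}=\{q\le x\text{ prime}:\ p\mid q-1\Rightarrow p\in P_k\}$. *)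

(* Defs.v *)
From HB Require Import structures.
From mathcomp Require Import all_boot all_order all_algebra.
From mathcomp Require Import reals.
Set Implicit Arguments. Unset Strict Implicit. Unset Printing Implicit Defensive.
Import Order.TTheory GRing.Theory Num.Theory.
Local Open Scope ring_scope.

Definition phi_iter (i n : nat) : nat := iter i totient n.

Section Counting.
Variable R : realType.

(* #{ n : 1 <= n <= x, P n }  (n ranges over positive integers n <= x;
   the ordinal bound truncn x + 1 only serves to make the range finite). *)
Definition count_le (x : R) (P : pred nat) : nat :=
  #|[set n : 'I_(Num.truncn x).+1 | [&& (0 < n)%N, (n%:R <= x) & P n]]|.

Fixpoint Pset (x y : R) (k : nat) : pred nat :=
  match k with
  | 0 => fun p => prime p && (p%:R <= y)
  | k'.+1 => fun q => [&& prime q, q%:R <= x & all (Pset x y k') (primes q.-1)]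
  end.

Definition Psi (x : R) (P : pred nat) : nat :=
  count_le x (fun n => all P (primes n)).

Definition PhiK (k : nat) (x y : R) : nat :=
  count_le x (fun n => all (fun p => p%:R <= y) (primes (phi_iter k n))).

Definition S_card (i : nat) (x y : R) : nat :=
  count_le x (fun n => has (fun p => (y < p%:R) && (p ^ 2 %| phi_iter i n)%N)
                           (primes (phi_iter i n))).
End Counting.

(* Main.v *)
Require Import Defs.
From HB Require Import structures.
From mathcomp Require Import all_boot all_order all_algebra.
From mathcomp Require Import reals.
From mathcomp Require Import zify.
Import Order.TTheory GRing.Theory Num.Theory.

Lemma dvd_totient_factor p m : p \in primes m -> (p.-1 %| totient m)%N.
Proof.
move=> pm; have m0 : (0 < m)%N by move: pm; rewrite mem_primes => /and3P[].
rewrite totientE // (big_rem p) //=.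
by apply: dvdn_mulr; apply: dvdn_mulr.
Qed.

Lemma prime_dvd_totient q m : prime q -> (0 < m)%N -> (q %| totient m)%N ->
  exists2 p, p \in primes m & (q %| p.-1)%N || ((q == p) && (p ^ 2 %| m)%N).
Proof.
move=> qp m0; rewrite totientE // Euclid_dvd_prod // big_has => /hasP[p pm].
have pp : prime p by move: pm; rewrite mem_primes => /and3P[].
rewrite (Euclid_dvdM _ _ qp) (Euclid_dvdX _ _ qp) (dvdn_prime2 qp pp) => H; exists p => //.
case/orP: H => [->//|/andP[/eqP -> H]]; rewrite eqxx pfactor_dvdn //=.
by apply/orP; right; move: H; case: (logn p m) => [|[|l]].
Qed.

Lemma totient_leq n : (totient n <= n)%N.
Proof.
rewrite totient_count_coprime.
apply: (@leq_trans (\sum_(0 <= d < n) 1)); first by apply: leq_sum => i _; apply: leq_b1.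
by rewrite sum_nat_const_nat subn0 muln1.
Qed.

Section S.
Variables (R : realType) (x y : R).
Hypothesis yx : (y <= x)%R.

Lemma Pset_small j p : prime p -> (p%:R <= y)%R -> Pset x y j p.
Proof.
elim: j p => [|j IH] p pp py /=; first by rewrite pp py.
rewrite pp (le_trans py yx) /=; apply/allP => q.
rewrite mem_primes => /and3P[qp p0 qd]; apply: IH => //.
apply: le_trans py; rewrite ler_nat; apply: leq_trans (dvdn_leq p0 qd) _.
exact: leq_pred.
Qed.

Lemma stepP j m : (0 < m)%N -> (m%:R <= x)%R ->
  ~~ has (fun p => (y < p%:R)%R && (p ^ 2 %| m)%N) (primes m) ->
  all (Pset x y j.+1) (primes m) = all (Pset x y j) (primes (totient m)).
Proof.
move=> m0 mx H; apply/allP/allP => [A q|A p pm].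
- rewrite mem_primes => /and3P[qp t0 qd].
  have [p pm /orP[qd1|/andP[/eqP -> p2]]] := prime_dvd_totient _ _ qp m0 qd.
  + have /= /and3P[_ _ /allP] := A p pm; apply.
    have pp : prime p by move: pm; rewrite mem_primes => /and3P[].
    by rewrite mem_primes qp qd1 andbT; case: p pp {pm qd1}=> [|[|p]].
  + have pp : prime p by move: pm; rewrite mem_primes => /and3P[].
    apply: Pset_small => //; rewrite leNgt; apply/negP => yp.
    by move/hasP: H; apply; exists p => //; rewrite yp.
- have pp : prime p by move: pm; rewrite mem_primes => /and3P[].
  have pdm : (p %| m)%N by move: pm; rewrite mem_primes => /and3P[].
  have px : (p%:R <= x)%R by apply: le_trans mx; rewrite ler_nat dvdn_leq.
  rewrite /= pp px /=.
  apply/allP => q; rewrite mem_primes => /and3P[qp p0 qd]; apply: A.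
  rewrite mem_primes qp totient_gt0 m0 /=.
  exact: dvdn_trans qd (dvd_totient_factor _ _ pm).
Qed.

Lemma chain j m : (0 < m)%N -> (m%:R <= x)%R ->
  (forall i, (i < j)%N -> ~~ has (fun p => (y < p%:R)%R && (p ^ 2 %| phi_iter i m)%N)
                           (primes (phi_iter i m))) ->
  all (Pset x y j) (primes m) = all (fun p => (p%:R <= y)%R) (primes (phi_iter j m)).
Proof.
elim: j m => [|j IH] m m0 mx H.
  apply: eq_in_all => p; rewrite mem_primes /= => /and3P[-> _ _] //.
rewrite (stepP _ _ m0 mx (H 0 isT)) /phi_iter iterSr IH //.
- by rewrite totient_gt0.
- by apply: le_trans mx; rewrite ler_nat totient_leq.
- by move=> i ij; move: (H i.+1 ij); rewrite /phi_iter iterSr.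
Qed.
End S.

Lemma absle (a b c : nat) : (a <= b + c)%N -> (b <= a + c)%N -> (`|a%:Z - b%:Z| <= c%:Z)%R.
Proof. move=> *; lia. Qed.

Lemma card_sum (N : nat) (P : pred nat) :
  #|[set n : 'I_N | P n]| = (\sum_(n : 'I_N) P n)%N.
Proof.
rewrite -sum1_card big_mkcond; apply: eq_bigr => i _; rewrite inE.
by case: (P i).
Qed.

Theorem lemma4p3 (R : realType) (x y : R) (k : nat) :
  (2%:R <= y)%R -> (y <= x)%R ->
  (`| (Psi x (Pset x y k))%:Z - (PhiK k x y)%:Z | <= (\sum_(i < k) S_card i x y)%:Z)%R.
Proof.
move=> y2 yx.
pose D (n : nat) := (0 < n)%N && (n%:R <= x)%R.
pose Sp i n := has (fun p => (y < p%:R)%R && (p ^ 2 %| phi_iter i n)%N) (primes (phi_iter i n)).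
pose A n := all (Pset x y k) (primes n).
pose B n := all (fun p => (p%:R <= y)%R) (primes (phi_iter k n)).
have key n : D n -> ~~ has (fun i => Sp i n) (iota 0 k) -> A n = B n.
  case/andP=> n0 nx /hasPn H; apply: chain => // i ik.
  by apply: H; rewrite mem_iota.
have pw (P Q : nat -> bool) n : (forall n, D n -> ~~ has (fun i => Sp i n) (iota 0 k) -> P n = Q n) ->
    (([&& (0 < n)%N, (n%:R <= x)%R & P n] : nat) <= [&& (0 < n)%N, (n%:R <= x)%R & Q n] + \sum_(i < k) [&& (0 < n)%N, (n%:R <= x)%R & Sp i n])%N.
  move=> PQ; case n0: (0 < n)%N; case nx: (n%:R <= x)%R => //=.
  have Dn : D n by rewrite /D n0 nx.
  have [/hasP[i]|nh] := boolP (has (fun i => Sp i n) (iota 0 k)).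
    rewrite mem_iota /= => ik Si.
    rewrite (bigD1 (Ordinal ik)) //= Si /=.
    by case: (P n); case: (Q n).
  by rewrite (PQ n Dn nh) leq_addr.
have -> : Psi x (Pset x y k) = (\sum_(n : 'I_(Num.truncn x).+1) [&& (0 < n)%N, (n%:R <= x)%R & A n])%N.
  exact: (card_sum _ (fun n => [&& (0 < n)%N, (n%:R <= x)%R & A n])).
have -> : PhiK k x y = (\sum_(n : 'I_(Num.truncn x).+1) [&& (0 < n)%N, (n%:R <= x)%R & B n])%N.
  exact: (card_sum _ (fun n => [&& (0 < n)%N, (n%:R <= x)%R & B n])).
have -> : (\sum_(i < k) S_card i x y = \sum_(n : 'I_(Num.truncn x).+1) \sum_(i < k) [&& (0 < n)%N, (n%:R <= x)%R & Sp i n])%N.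
  rewrite exchange_big /=; apply: eq_bigr => i _.
  exact: (card_sum _ (fun n => [&& (0 < n)%N, (n%:R <= x)%R & Sp i n])).
apply: absle; rewrite -big_split /=; apply: leq_sum => n _; apply: pw.
- exact: key.
- by move=> m Dm H; rewrite (key m Dm H).
Qed.
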